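(* Let $X$ be a finite Abelian group containing no elements of order $2$, and let $\alpha$ be an automorphism of $X$. Set $K=\mathrm{Ker}(I+\alpha)$, where $I$ is the identity automorphism. Let $\xi_1$ and $\xi_2$ be independent random variables with values in $X$ and distributions $\mu_1$ and $\mu_2$ whose characteristic functions $\hat\mu_1,\hat\mu_2$ do not vanish anywhere on the character group $Y$ of $X$. Assume that the conditional distribution of the linear form $L_2=\xi_1+\alpha\xi_2$ given $L_1=\xi_1+\xi_2$ is symmetric. Then $\mu_j=\omega*E_{x_j}$, $j=1,2$, where $\omega$ is a distribution supported in $K$ and $x_1,x_2\in X$.
   Context: For a locally compact Abelian group $X$ with character group $Y$, the characteristic function of a probability distribution $\mu$ on $X$ is $\hat\mu(y)=\int_X (x,y)\,d\mu(x)$, $y\in Y$, where $(x,y)$ is the value of the character $y$ at $x$. $E_x$ denotes the degenerate distribution concentrated at $x\in X$, and $*$ denotes convolution. ''The conditional distribution of $L_2$ given $L_1$ is symmetric'' means that the random vectors $(L_1,L_2)$ and $(L_1,-L_2)$ have the same distribution. *)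

(* Defs.v *)
From mathcomp Require Import all_boot all_order all_algebra all_field.
Set Implicit Arguments. Unset Strict Implicit. Unset Printing Implicit Defensive.
Import Order.TTheory GRing.Theory Num.Theory.
Local Open Scope ring_scope.

Definition is_distribution (X : finZmodType) (mu : X -> algC) : Prop :=
  (forall x, 0 <= mu x) /\ \sum_(x : X) mu x = 1.

Definition is_character (X : finZmodType) (chi : X -> algC) : Prop :=
  (forall x y, chi (x + y) = chi x * chi y) /\ (forall x, `|chi x| = 1).

Definition charfun (X : finZmodType) (mu : X -> algC) (chi : X -> algC) : algC :=
  \sum_(x : X) mu x * chi x.

Definition degen (X : finZmodType) (a : X) : X -> algC :=
  fun x => (x == a)%:R.

Definition conv (X : finZmodType) (mu nu : X -> algC) : X -> algC :=
  fun x => \sum_(y : X) mu y * nu (x - y).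

(* Joint law of (L1, L2) = (xi1 + xi2, xi1 + alpha xi2) where xi1, xi2 are
   independent with laws mu1, mu2; sgn = true gives the law of (L1, -L2). *)
Definition law_L1L2 (X : finZmodType) (alpha : X -> X) (mu1 mu2 : X -> algC)
  (sgn : bool) (a b : X) : algC :=
  \sum_(p : X * X | (p.1 + p.2 == a) &&
        ((if sgn then - (p.1 + alpha p.2) else p.1 + alpha p.2) == b))
     mu1 p.1 * mu2 p.2.

(* The conditional distribution of L2 given L1 is symmetric:
   (L1, L2) and (L1, -L2) are identically distributed. *)
Definition cond_symmetric (X : finZmodType) (alpha : X -> X) (mu1 mu2 : X -> algC) : Prop :=
  forall a b : X, law_L1L2 alpha mu1 mu2 false a b = law_L1L2 alpha mu1 mu2 true a b.

Definition kerIa (X : finZmodType) (alpha : X -> X) : {set X} :=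
  [set x : X | x + alpha x == 0].

(* Main.v *)
Require Import Defs.
From mathcomp Require Import all_boot all_order all_algebra all_field.
From mathcomp Require Import all_fingroup all_solvable all_character.
From mathcomp Require Import ring.
From Stdlib Require Import FunctionalExtensionality.
Import Order.TTheory GRing.Theory Num.Theory.
Local Open Scope ring_scope.
Import FinRing.Theory.

Section Chars.
Variable X : finZmodType.
Implicit Types (y a b : X -> algC) (s t : X).

Lemma chM y s t : is_character y -> y (s + t) = y s * y t.
Proof. by case=> H _; apply: H. Qed.
Lemma chn y s : is_character y -> `|y s| = 1.
Proof. by case=> _ H; apply: H. Qed.
Lemma chne0 y s : is_character y -> y s != 0.
Proof. by move=> Hy; rewrite -normr_eq0 chn // oner_eq0. Qed.
Lemma ch0 y : is_character y -> y 0 = 1.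
Proof.
move=> Hy; have := chM y 0 0 Hy; rewrite addr0 => E.
by apply: (mulIf (chne0 y 0 Hy)); rewrite mul1r -E.
Qed.
Lemma chN y s : is_character y -> y (- s) = (y s)^-1.
Proof.
move=> Hy; have := chM y s (- s) Hy; rewrite subrr ch0 // => E.
by apply: (mulfI (chne0 y s Hy)); rewrite -E mulfV // chne0.
Qed.
Lemma chMn y s n : is_character y -> y (s *+ n) = y s ^+ n.
Proof.
move=> Hy; elim: n => [|n IH]; first by rewrite mulr0n expr0 ch0.
by rewrite mulrS chM // IH exprS.
Qed.
Lemma mulrn_card s : s *+ #|X| = 0.
Proof.
have := expg_cardG (in_setT s : s \in [set: X]%G).
by rewrite zmodXgE cardsT.
Qed.
Lemma chcard y s : is_character y -> y s ^+ #|X| = 1.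
Proof. by move=> Hy; rewrite -chMn // mulrn_card ch0. Qed.

Definition cmul a b := fun x => a x * b x.
Definition ccomp a (T : X -> X) := fun x => a (T x).
Definition cexp a (j : nat) := fun x => a x ^+ j.
Definition cone : X -> algC := fun _ => 1.

Lemma char_mul a b : is_character a -> is_character b -> is_character (cmul a b).
Proof.
move=> Ha Hb; split=> [s t|s]; rewrite /cmul.
  by rewrite !chM // mulrACA.
by rewrite normrM !chn // mulr1.
Qed.
Lemma char_comp a T : is_character a -> (forall s t, T (s + t) = T s + T t) ->
  is_character (ccomp a T).
Proof. by move=> Ha HT; split=> [s t|s]; rewrite /ccomp ?HT ?chM ?chn. Qed.
Lemma char_exp a j : is_character a -> is_character (cexp a j).
Proof.
move=> Ha; split=> [s t|s]; rewrite /cexp ?chM ?exprMn //.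
by rewrite normrX chn // expr1n.
Qed.
Lemma char_one : is_character cone.
Proof. by split=> [s t|s]; rewrite /cone ?mulr1 ?normr1. Qed.

Lemma charfun_ext mu a b : (forall x, a x = b x) -> charfun mu a = charfun mu b.
Proof. by move=> E; apply: eq_bigr => x _; rewrite E. Qed.
Lemma charfun_le1 mu a : is_distribution mu -> is_character a -> `|charfun mu a| <= 1.
Proof.
case=> H0 H1 Ha; rewrite -H1 (le_trans (ler_norm_sum _ _ _)) //.
by apply: ler_sum => x _; rewrite normrM (chn a) // mulr1 ger0_norm.
Qed.
Lemma charfun_one mu : is_distribution mu -> charfun mu cone = 1.
Proof. case=> _ H1; rewrite -H1; apply: eq_bigr => x _. exact: mulr1. Qed.

End Chars.
Arguments cmul {X}.
Arguments ccomp {X}.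
Arguments cexp {X}.
Arguments cone {X}.
Arguments chM {X}.
Arguments chn {X}.
Arguments chne0 {X}.
Arguments ch0 {X}.
Arguments chN {X}.
Arguments chMn {X}.
Arguments chcard {X}.
Arguments char_mul {X}.
Arguments char_comp {X}.
Arguments char_exp {X}.
Arguments char_one {X}.
Arguments charfun_ext {X}.
Arguments charfun_le1 {X}.
Arguments charfun_one {X}.
Arguments mulrn_card {X}.
Lemma fourier_inj (X : finZmodType) (m : X -> algC) :
  (forall chi, is_character chi -> \sum_x m x * chi x = 0) -> forall y, m y = 0.
Proof.
move=> H y.
have lin : forall i : Iirr [set: X]%G, 'chi_i \is a linear_char.
  by apply/char_abelianP; exact: zmod_abelian.
have chiC i : is_character (fun x => 'chi[[set: X]%G]_i x).
  split => [a b|a]; last by rewrite normC_lin_char ?inE.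
  by rewrite -zmodMgE lin_charM ?inE.
have E : \sum_i ('chi[[set: X]%G]_i y)^* * (\sum_x m x * 'chi_i x) = 0.
  by rewrite big1 // => i _; rewrite H ?mulr0.
have cl x : (x \in (y ^: [set: X]%G)%g) = (x == y).
  apply/imsetP/eqP => [[z _ ->]|->]; last by exists 0; rewrite ?inE // conjg1.
  rewrite /conjg /= !zmodMgE zmodVgE; by rewrite addrC -addrA addrN addr0.
have S x : \sum_i ('chi[[set: X]%G]_i y)^* * (m x * 'chi_i x) = m x * (#|('C_([set: X]%G)[x])%g|%:R *+ (x == y)).
  under eq_bigr do rewrite mulrCA.
  rewrite -mulr_sumr; under eq_bigr do rewrite mulrC.
  by rewrite second_orthogonality_relation ?inE // cl.
move: E; under eq_bigr do rewrite mulr_sumr.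
rewrite exchange_big /=; under eq_bigr do rewrite S.
rewrite (bigD1 y) //= big1 => [|x nxy]; last by rewrite (negPf nxy) mulr0.
rewrite addr0 eqxx mulr1n => /eqP.
rewrite mulf_eq0 pnatr_eq0 (negPf (lt0n_neq0 (cardG_gt0 _))) orbF => /eqP; exact.
Qed.

Lemma sum_delta (T : finType) (z : T) (F : T -> algC) :
  \sum_x (x == z)%:R * F x = F z.
Proof.
rewrite (bigD1 z) //= eqxx mul1r big1 ?addr0 // => x /negPf ->.
by rewrite mul0r.
Qed.

Lemma separation (X : finZmodType) (z : X) :
  (forall w, is_character w -> w z = 1) -> z = 0.
Proof.
move=> H.
have E : (1:algC) - (z == 0)%:R = 0.
  have := @fourier_inj X (fun x => (x == z)%:R - (x == 0)%:R) _ z.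
  rewrite eqxx; apply => w Hw; under eq_bigr do rewrite mulrBl.
  by rewrite sumrB !sum_delta H // ch0 // subrr.
apply/eqP; move: E; case: (z == 0) => //; rewrite subr0 => /eqP.
by rewrite oner_eq0.
Qed.

Lemma conv_degen (X : finZmodType) (om : X -> algC) (a z : X) :
  conv om (degen a) z = om (z - a).
Proof.
have sK (u v : X) : u - (u - v) = v by rewrite opprB addrC subrK.
rewrite /conv /degen (bigD1 (z - a)) //= sK eqxx mulr1 big1 ?addr0 // => y ne.
rewrite (_ : (z - y == a) = false) ?mulr0 //; apply/negbTE.
by apply: contra ne => /eqP <-; rewrite sK.
Qed.

Section Main.
Variables (X : finZmodType) (hX : forall x : X, x + x = 0 -> x = 0)
  (alpha : {additive X -> X}) (ai : X -> X)
  (aiK : forall x, alpha (ai x) = x) (aiK' : forall x, ai (alpha x) = x)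
  (h : X -> X) (hK : forall x, h x + h x = x)
  (mu1 mu2 : X -> algC)
  (hmu1 : is_distribution mu1) (hmu2 : is_distribution mu2)
  (hne1 : forall chi, is_character chi -> charfun mu1 chi != 0)
  (hne2 : forall chi, is_character chi -> charfun mu2 chi != 0)
  (hsym : cond_symmetric alpha mu1 mu2).

Lemma dblI : injective (fun x : X => x + x).
Proof.
move=> x y E; apply/eqP; rewrite -subr_eq0; apply/eqP/hX.
by rewrite addrACA E -opprD subrr.
Qed.
Lemma hD s t : h (s + t) = h s + h t.
Proof. by apply: dblI; rewrite /= hK addrACA !hK. Qed.
Lemma h0 : h 0 = 0.
Proof. by apply: dblI; rewrite /= hK addr0. Qed.
Lemma hN s : h (- s) = - h s.
Proof. by apply: dblI; rewrite /= hK -opprD hK. Qed.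
Lemma hdbl s : h (s + s) = s.
Proof. by apply: dblI; rewrite /= hK. Qed.
Lemma hA s : h (alpha s) = alpha (h s).
Proof. by apply: dblI; rewrite /= hK -raddfD hK. Qed.
Lemma aiD s t : ai (s + t) = ai s + ai t.
Proof. by rewrite -{1}(aiK s) -{1}(aiK t) -raddfD aiK'. Qed.
Definition negX (x : X) := - x.
Lemma negD s t : negX (s + t) = negX s + negX t.
Proof. by rewrite /negX opprD. Qed.

Definition Pt (x : X) := h (x + alpha x).
Definition Qt (x : X) := h (x - alpha x).
Lemma PtD s t : Pt (s + t) = Pt s + Pt t.
Proof. by rewrite /Pt raddfD addrACA -hD. Qed.
Lemma QtD s t : Qt (s + t) = Qt s + Qt t.
Proof. by rewrite /Qt raddfD opprD addrACA -hD. Qed.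
Lemma PQ x : Pt x + Qt x = x.
Proof. by rewrite /Pt /Qt -hD addrACA subrr addr0 hdbl. Qed.
Lemma PmQ x : Pt x - Qt x = alpha x.
Proof. by rewrite /Pt /Qt -hN -hD opprB addrCA addrAC subrr add0r hdbl. Qed.
Lemma PQC x : Pt (Qt x) = Qt (Pt x).
Proof.
rewrite /Pt /Qt -!hA -!hN -!hD; congr (h (h _)).
by rewrite raddfB raddfD addrA addrNK opprD addrA addrK.
Qed.
Lemma PPQQ x : Pt (Pt x) - Qt (Qt x) = alpha x.
Proof.
have E : (Pt (Pt x) - Qt (Pt x)) + (Pt (Qt x) - Qt (Qt x)) = alpha x.
  by rewrite !PmQ -raddfD PQ.
by rewrite -E PQC addrA addrNK.
Qed.

Ltac addT := solve [exact: PtD | exact: QtD | exact: hD | exact: aiD | exact: negD | exact: (raddfD alpha)].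
Ltac chr := repeat first [assumption | apply: char_one | apply: char_mul | apply: char_exp | (apply: char_comp; [|addT])].

Lemma sum_law sgn (u v : X -> algC) :
  \sum_a \sum_b law_L1L2 alpha mu1 mu2 sgn a b * (u a * v b) =
  \sum_(p : X * X) mu1 p.1 * mu2 p.2 *
     (u (p.1 + p.2) * v (if sgn then - (p.1 + alpha p.2) else p.1 + alpha p.2)).
Proof.
rewrite /law_L1L2.
under eq_bigr do under eq_bigr do rewrite big_mkcond mulr_suml.
under eq_bigr do rewrite exchange_big.
rewrite exchange_big; apply: eq_bigr => p _ /=.
set t := (if sgn then _ else _).
have inner a : \sum_b (if (p.1 + p.2 == a) && (t == b) then mu1 p.1 * mu2 p.2 else 0)
    * (u a * v b) = (a == p.1 + p.2)%:R * (mu1 p.1 * mu2 p.2 * (u a * v t)).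
  rewrite (bigD1 t) //= eqxx andbT big1 ?addr0 => [|b /negPf ne]; last first.
    by rewrite [t == b]eq_sym ne andbF mul0r.
  by rewrite eq_sym; case: (_ == _); rewrite ?mul1r ?mul0r.
under eq_bigr do rewrite inner.
by rewrite sum_delta.
Qed.

Lemma K3 u v : is_character u -> is_character v ->
  charfun mu1 (cmul u v) * charfun mu2 (cmul u (ccomp v alpha)) =
  charfun mu1 (cmul u (ccomp v negX)) * charfun mu2 (cmul u (ccomp (ccomp v negX) alpha)).
Proof.
move=> Hu Hv.
have E1 : \sum_a \sum_b law_L1L2 alpha mu1 mu2 false a b * (u a * v b) =
  charfun mu1 (cmul u v) * charfun mu2 (cmul u (ccomp v alpha)).
  rewrite sum_law /charfun mulr_suml; under [RHS]eq_bigr do rewrite mulr_sumr.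
  rewrite pair_bigA /=; apply: eq_bigr => -[x1 x2] _ /=.
  rewrite /cmul /ccomp !chM //; ring.
have E2 : \sum_a \sum_b law_L1L2 alpha mu1 mu2 true a b * (u a * v b) =
  charfun mu1 (cmul u (ccomp v negX)) * charfun mu2 (cmul u (ccomp (ccomp v negX) alpha)).
  rewrite sum_law /charfun mulr_suml; under [RHS]eq_bigr do rewrite mulr_sumr.
  rewrite pair_bigA /=; apply: eq_bigr => -[x1 x2] _ /=.
  rewrite /cmul /ccomp /negX opprD !chM //; ring.
rewrite -E1 -E2; apply: eq_bigr => a _; apply: eq_bigr => b _.
by rewrite hsym.
Qed.

Definition N1 a := `|charfun mu1 a|.
Definition N2 a := `|charfun mu2 a|.
Lemma N1ext a b : (forall x, a x = b x) -> N1 a = N1 b.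
Proof. by move=> E; rewrite /N1 (charfun_ext _ _ _ E). Qed.
Lemma N2ext a b : (forall x, a x = b x) -> N2 a = N2 b.
Proof. by move=> E; rewrite /N2 (charfun_ext _ _ _ E). Qed.
Arguments N1ext [a b].
Arguments N2ext [a b].
Lemma N1gt0 a : is_character a -> 0 < N1 a.
Proof. by move=> Ha; rewrite /N1 normr_gt0 hne1. Qed.
Lemma N2gt0 a : is_character a -> 0 < N2 a.
Proof. by move=> Ha; rewrite /N2 normr_gt0 hne2. Qed.
Lemma N1nz a : is_character a -> N1 a != 0.
Proof. by move=> Ha; rewrite lt0r_neq0 // N1gt0. Qed.
Lemma N2nz a : is_character a -> N2 a != 0.
Proof. by move=> Ha; rewrite lt0r_neq0 // N2gt0. Qed.
Lemma N1le1 a : is_character a -> N1 a <= 1.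
Proof. by move=> Ha; apply: charfun_le1. Qed.
Lemma N2le1 a : is_character a -> N2 a <= 1.
Proof. by move=> Ha; apply: charfun_le1. Qed.
Lemma N1one : N1 cone = 1.
Proof. by rewrite /N1 charfun_one // normr1. Qed.
Lemma N2one : N2 cone = 1.
Proof. by rewrite /N2 charfun_one // normr1. Qed.

Lemma Rform a b Y Z : is_character a -> is_character b ->
  (forall x, Y x = a (Pt x) * b (Qt x)) -> (forall x, Z x = a (Qt x) * b (Pt x)) ->
  N1 a * N2 Y = N1 b * N2 Z.
Proof.
move=> Ha Hb HY HZ.
pose u := cmul (ccomp a h) (ccomp b h).
pose v := cmul (ccomp a h) (ccomp (ccomp b negX) h).
have Hu : is_character u by rewrite /u; chr.
have Hv : is_character v by rewrite /v; chr.
have E1 x : cmul u v x = a x.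
  rewrite /cmul /ccomp /u /v /negX mulrACA -(chM _ _ _ Ha) -(chM _ _ _ Hb).
  by rewrite hK subrr (ch0 _ Hb) mulr1.
have E2 x : cmul u (ccomp v alpha) x = Y x.
  rewrite /cmul /ccomp /u /v /negX mulrACA -(chM _ _ _ Ha) -(chM _ _ _ Hb).
  by rewrite -hN -!hD HY.
have E3 x : cmul u (ccomp v negX) x = b x.
  rewrite /cmul /ccomp /u /v /negX mulrACA -(chM _ _ _ Ha) -(chM _ _ _ Hb).
  by rewrite hN opprK subrr hK (ch0 _ Ha) mul1r.
have E4 x : cmul u (ccomp (ccomp v negX) alpha) x = Z x.
  rewrite /cmul /ccomp /u /v /negX mulrACA -(chM _ _ _ Ha) -(chM _ _ _ Hb).
  by rewrite [in X in b X]hN opprK -!hD HZ.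
have := K3 u v Hu Hv.
rewrite (charfun_ext _ _ _ E1) (charfun_ext _ _ _ E2) (charfun_ext _ _ _ E3).
rewrite (charfun_ext _ _ _ E4) => E.
by rewrite /N1 /N2 -!normrM E.
Qed.
Arguments Rform [a b Y Z].
Ltac nzs := repeat (apply/andP; split); (apply: N1nz || apply: N2nz); chr.

Lemma chinv_ok (a : X -> algC) (s : X) : is_character a -> a s * a (- s) = 1.
Proof. by move=> Ha; rewrite -(chM _ _ _ Ha) subrr (ch0 _ Ha). Qed.

Lemma step2 k m : is_character k -> is_character m ->
  N1 (cmul (ccomp k Pt) (ccomp m Qt)) = N1 (ccomp k Pt) * N1 (ccomp m Qt).
Proof.
move=> Hk Hm.
pose e1 := ccomp k Pt; pose e2 := ccomp m Qt.
pose Qbk := ccomp (ccomp k negX) Qt; pose Pbm := ccomp (ccomp m negX) Pt.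
have He1 : is_character e1 by rewrite /e1; chr.
have He2 : is_character e2 by rewrite /e2; chr.
have HQbk : is_character Qbk by rewrite /Qbk; chr.
have HPbm : is_character Pbm by rewrite /Pbm; chr.
have key a : is_character a ->
  N1 (cmul (cmul a e1) e2) * N1 a * (N1 Qbk * N1 Pbm) =
  N1 (cmul a e1) * N1 (cmul a e2) * N1 (cmul Qbk Pbm).
  move=> Ha.
  have R1 : N1 a * N2 (ccomp a Pt) = N1 cone * N2 (ccomp a Qt).
    by apply: (Rform Ha char_one) => x; rewrite /ccomp /cone mulr1.
  have R2 : N1 (cmul a e1) * N2 (cmul (ccomp a Pt) (ccomp k alpha)) = N1 Qbk * N2 (ccomp a Qt).
    apply: Rform; [chr|chr| |] => x; rewrite /cmul /ccomp /e1 /Qbk /negX -mulrA -(chM _ _ _ Hk).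
      by rewrite PPQQ.
    by rewrite PQC subrr (ch0 _ Hk) mulr1.
  have R3 : N1 (cmul a e2) * N2 (ccomp a Pt) =
            N1 Pbm * N2 (cmul (ccomp a Qt) (ccomp (ccomp m negX) alpha)).
    apply: Rform; [chr|chr| |] => x; rewrite /cmul /ccomp /e2 /Pbm /negX -mulrA -(chM _ _ _ Hm).
      by rewrite PQC subrr (ch0 _ Hm) mulr1.
    by rewrite -PPQQ opprB.
  have R4 : N1 (cmul (cmul a e1) e2) * N2 (cmul (ccomp a Pt) (ccomp k alpha)) =
            N1 (cmul Qbk Pbm) * N2 (cmul (ccomp a Qt) (ccomp (ccomp m negX) alpha)).
    apply: Rform; [chr|chr| |] => x; rewrite /e1 /e2 /Qbk /Pbm /cmul /ccomp /negX /=.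
      rewrite -(PPQQ x) (chM _ _ _ Hk) PQC (chN _ _ Hm).
      by field; rewrite chne0.
    rewrite -(PPQQ x) opprB (chM _ _ _ Hm) PQC (chN _ _ Hk).
    by field; rewrite chne0.
  set A := N1 (cmul (cmul a e1) e2) in R4 *; set B := N1 a in R1 *.
  set D1 := N1 (cmul a e1) in R2 *; set D2 := N1 (cmul a e2) in R3 *.
  set E1 := N1 Qbk in R2 *; set E2 := N1 Pbm in R3 *.
  set C1 := N1 (cmul Qbk Pbm) in R4 *.
  set y1 := N2 (ccomp a Pt) in R1 R3; set y2 := N2 (cmul (ccomp a Pt) (ccomp k alpha)) in R2 R4.
  set z1 := N2 (ccomp a Qt) in R1 R2; set z2 := N2 (cmul (ccomp a Qt) (ccomp (ccomp m negX) alpha)) in R3 R4.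
  rewrite N1one mul1r in R1.
  have nz : y1 * y2 * z1 * z2 != 0.
    by rewrite !mulf_neq0 // lt0r_neq0 // N2gt0 //; chr.
  apply: (mulIf nz).
  transitivity ((A * y2) * (B * y1) * (E1 * z1) * (E2 * z2)); first by ring.
  by rewrite R4 R1 -R2 -R3; ring.
pose c := N1 (cmul Qbk Pbm) / (N1 Qbk * N1 Pbm).
pose G a := N1 (cmul a e1) / N1 a.
have Gext a b : (forall x, a x = b x) -> G a = G b.
  move=> E; rewrite /G (N1ext E); congr (_ / _); apply: N1ext => x.
  by rewrite /cmul E.
have nE : N1 Qbk * N1 Pbm != 0 by rewrite mulf_neq0 // lt0r_neq0 // N1gt0.
have Gstep a : is_character a -> G (cmul a e2) = c * G a.
  move=> Ha; have K := key a Ha.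
  have nB : N1 a != 0 by rewrite lt0r_neq0 // N1gt0.
  have nD2 : N1 (cmul a e2) != 0 by rewrite lt0r_neq0 // N1gt0 //; chr.
  rewrite /G /c (N1ext (b := cmul (cmul a e1) e2)); last first.
    by move=> x; rewrite /cmul mulrAC.
  have EA : N1 (cmul (cmul a e1) e2) = N1 (cmul a e1) * N1 (cmul a e2) *
      N1 (cmul Qbk Pbm) / (N1 a * (N1 Qbk * N1 Pbm)).
    by rewrite -K; field; nzs.
  by rewrite EA; field; nzs.
have Giter a j : is_character a -> G (cmul a (cexp e2 j)) = c ^+ j * G a.
  move=> Ha; elim: j => [|j IH].
    by rewrite expr0 mul1r; apply: Gext => x; rewrite /cmul /cexp expr0 mulr1.
  rewrite exprS -mulrA -IH -Gstep; last by chr.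
  by apply: Gext => x; rewrite /cmul /cexp exprS; ring.
have c1 : c = 1.
  have := Giter cone #|X| char_one.
  rewrite (Gext _ cone) => [E|x]; last by rewrite /cmul /cexp (chcard _ _ He2) mulr1.
  have nG : G cone != 0 by rewrite /G mulf_neq0 ?invr_eq0 // lt0r_neq0 // N1gt0 //; chr.
  have : c ^+ #|X| = 1 by apply: (mulIf nG); rewrite mul1r -E.
  move/eqP; rewrite pexpr_eq1; [by move/eqP | by apply/card_gt0P; exists 0 |].
  by rewrite /c divr_ge0 ?mulr_ge0 ?normr_ge0.
have C1E : N1 (cmul Qbk Pbm) = N1 Qbk * N1 Pbm.
  by move: c1; rewrite /c => c1'; rewrite -[LHS](divfK nE) c1' mul1r.
have := key cone char_one.
rewrite N1one mulr1 C1E => /(mulIf nE) E.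
rewrite (N1ext (b := cmul (cmul cone e1) e2)); last by move=> x; rewrite /cmul /cone mul1r.
by rewrite E; congr (_ * _); apply: N1ext => x; rewrite /cmul /cone mul1r.
Qed.

Lemma HL k' m : is_character k' -> is_character m ->
  (forall x, k' (Pt x) = m (Qt x)) -> N1 (ccomp m Qt) = 1.
Proof.
move=> Hk Hm E.
have P j : N1 (cexp (ccomp m Qt) j) = N1 (ccomp m Qt) ^+ j.
  elim: j => [|j IH].
    by rewrite expr0 -N1one; apply: N1ext => x; rewrite /cexp /cone expr0.
  rewrite (N1ext (b := cmul (ccomp (cexp k' j) Pt) (ccomp m Qt))); last first.
    by move=> x; rewrite /cmul /cexp /ccomp E exprSr.
  rewrite step2; [|exact: char_exp|done]; rewrite exprSr -IH; congr (_ * _); apply: N1ext => x.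
  by rewrite /cexp /ccomp E.
have := P #|X|; rewrite (N1ext (b := cone)) ?N1one => [E'|x]; last first.
  by rewrite /cexp /ccomp /cone (chcard _ _ Hm).
move/esym/eqP: E'; rewrite pexpr_eq1; [by move/eqP | by apply/card_gt0P; exists 0 |].
exact: normr_ge0.
Qed.

Lemma mod1 w : is_character w -> N1 (ccomp w Pt) = 1 /\ N2 (ccomp w Pt) = 1.
Proof.
move=> Hw.
pose k := ccomp (ccomp w Pt) ai.
have Hk : is_character k by rewrite /k; chr.
have kP x : k (Pt x) = w (Pt x) * k (Qt x).
  have e : Pt x = alpha x + Qt x by rewrite -(PmQ x) addrNK.
  by rewrite {1}e (chM _ _ _ Hk) /k /ccomp aiK'.
have S1 : N1 (ccomp k Pt) * N2 (ccomp w Pt) = N1 (ccomp (ccomp k negX) Qt) * N2 cone.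
  apply: Rform; [chr|chr| |] => x; rewrite /ccomp /negX /=.
    by rewrite -(chM _ _ _ Hk) PPQQ /k /ccomp aiK'.
  by rewrite /cone PQC chinv_ok.
have S2 : N1 (ccomp k Pt) = N1 (ccomp w Pt) * N1 (ccomp k Qt).
  rewrite -step2 //; apply: N1ext => x; by rewrite /cmul /ccomp kP.
have HQ : N1 (ccomp k Qt) = 1.
  apply: (HL (cmul k (ccomp w negX)) k); [chr|done|] => x.
  by rewrite /cmul /ccomp /negX kP mulrAC (chN _ _ Hw) mulfV ?mul1r // chne0.
have HQb : N1 (ccomp (ccomp k negX) Qt) = 1.
  apply: (HL (ccomp (cmul k (ccomp w negX)) negX) (ccomp k negX)); [chr|chr|] => x.
  rewrite /cmul /ccomp /negX opprK !(chN _ _ Hk) kP invfM.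
  by rewrite mulrAC mulVf ?mul1r // chne0.
rewrite S2 HQ HQb N2one !mulr1 in S1.
have L1 := N1le1 (ccomp w Pt) ltac:(chr).
have L2 := N2le1 (ccomp w Pt) ltac:(chr).
have G1 := N1gt0 (ccomp w Pt) ltac:(chr).
have G2 := N2gt0 (ccomp w Pt) ltac:(chr).
have A1 : N1 (ccomp w Pt) = 1.
  apply: le_anti; rewrite L1 /= -{1}S1 ger_pMr //.
have A2 : N2 (ccomp w Pt) = 1.
  apply: le_anti; rewrite L2 /= -{1}S1 ger_pMl //.
by [].
Qed.

Lemma supp_eq mu : is_distribution mu ->
  (forall w, is_character w -> `|charfun mu (ccomp w Pt)| = 1) ->
  forall x x', mu x != 0 -> mu x' != 0 -> Pt x = Pt x'.
Proof.
move=> [hmu0 hmu1'] H x x' nx nx'.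
apply/eqP; rewrite -subr_eq0; apply/eqP/separation => w Hw.
have : `|\sum_x mu x * w (Pt x)| = \sum_x `|mu x * w (Pt x)|.
  have := H w Hw; rewrite /charfun /ccomp => ->.
  under eq_bigr do rewrite normrM (chn _ _ Hw) mulr1 ger0_norm //.
  by rewrite hmu1'.
case/normC_sum_eq => t t1 Ht.
have Wt y : mu y != 0 -> w (Pt y) = t.
  move=> ny; apply: (mulfI ny); rewrite [LHS]Ht // normrM (chn _ _ Hw) mulr1.
  by rewrite ger0_norm.
have nt : t != 0 by rewrite -normr_eq0 (eqP t1) oner_eq0.
by rewrite (chM _ _ _ Hw) (chN _ _ Hw) !Wt // mulfV.
Qed.

Lemma supp1 x x' : mu1 x != 0 -> mu1 x' != 0 -> Pt x = Pt x'.
Proof. by apply: supp_eq => // w Hw; case: (mod1 w Hw). Qed.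
Lemma supp2 x x' : mu2 x != 0 -> mu2 x' != 0 -> Pt x = Pt x'.
Proof. by apply: supp_eq => // w Hw; case: (mod1 w Hw). Qed.

Lemma final_rel x2 w : mu2 x2 != 0 -> is_character w ->
  charfun mu2 w = charfun mu1 w * w (Pt x2 + Pt x2).
Proof.
move=> nx2 Hw.
pose u := ccomp w h.
have Hu : is_character u by rewrite /u; chr.
have E1 x : cmul u u x = w x by rewrite /cmul /u /ccomp -(chM _ _ _ Hw) hK.
have E2 x : cmul u (ccomp u alpha) x = ccomp w Pt x.
  by rewrite /cmul /u /ccomp -(chM _ _ _ Hw) -hD.
have E3 x : cmul u (ccomp u negX) x = cone x.
  by rewrite /cmul /u /ccomp /negX /cone -(chM _ _ _ Hw) hN subrr (ch0 _ Hw).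
have E4 x : cmul u (ccomp (ccomp u negX) alpha) x = ccomp w Qt x.
  by rewrite /cmul /u /ccomp /negX -(chM _ _ _ Hw) -hD.
have := K3 u u Hu Hu.
rewrite (charfun_ext _ _ _ E1) (charfun_ext _ _ _ E2) (charfun_ext _ _ _ E3).
rewrite (charfun_ext _ _ _ E4) charfun_one // mul1r.
have gP : charfun mu2 (ccomp w Pt) = w (Pt x2).
  rewrite /charfun /ccomp (eq_bigr (fun x => mu2 x * w (Pt x2))); last first.
    move=> x _; have [->|nx] := eqVneq (mu2 x) 0; first by rewrite !mul0r.
    by rewrite (supp2 _ _ nx nx2).
  by rewrite -mulr_suml hmu2.2 mul1r.
have gQ : charfun mu2 (ccomp w Qt) = charfun mu2 w * w (- Pt x2).
  rewrite /charfun /ccomp mulr_suml; apply: eq_bigr => x _.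
  have [->|nx] := eqVneq (mu2 x) 0; first by rewrite !mul0r.
  have -> : Qt x = x - Pt x by apply/eqP; rewrite eq_sym subr_eq addrC PQ.
  by rewrite (supp2 _ _ nx nx2) (chM _ _ _ Hw) mulrA.
rewrite gP gQ => E.
rewrite (chM _ _ _ Hw) mulrA E -mulrA (chN _ _ Hw) mulVf ?mulr1 //.
exact: chne0.
Qed.

Lemma main_sec : exists (omega : X -> algC) (x1 x2 : X),
    [/\ is_distribution omega,
        (forall x, x \notin kerIa alpha -> omega x = 0),
        mu1 = conv omega (degen x1) &
        mu2 = conv omega (degen x2)].
Proof.
have ex (mu : X -> algC) : is_distribution mu -> exists x, mu x != 0.
  move=> [_ H1]; case: (pickP (fun x => mu x != 0)) => [x nx|none]; first by exists x.
  have : \sum_x mu x = 0 by apply: big1 => x _; move: (none x) => /negbFE/eqP.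
  by rewrite H1 => /eqP; rewrite oner_eq0.
have [x1 nx1] := ex _ hmu1.
have [x2 nx2] := ex _ hmu2.
pose d := Pt x2 + Pt x2.
have M2 z : mu2 z = mu1 (z - d).
  apply/eqP; rewrite -subr_eq0; apply/eqP.
  apply: (@fourier_inj X (fun z => mu2 z - mu1 (z - d))) => w Hw.
  under eq_bigr do rewrite mulrBl.
  rewrite sumrB [X in _ - X](reindex_inj (addIr d)) /=.
  under [X in _ - X]eq_bigr do rewrite addrK (chM _ _ _ Hw) mulrA.
  by rewrite -mulr_suml -/(charfun mu2 w) -/(charfun mu1 w) (final_rel x2 w nx2 Hw) subrr.
clearbody d.
exists (fun x => mu1 (x + x1)), x1, (d + x1); split.
- split => [x|]; first exact: hmu1.1.
  by rewrite -hmu1.2 [RHS](reindex_inj (addIr x1)).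
- move=> x; apply: contraNeq => nx; rewrite /kerIa inE.
  have := supp1 _ _ nx nx1; rewrite PtD => E.
  have Px : h (x + alpha x) = 0 by apply: (addIr (Pt x1)); rewrite add0r.
  by rewrite -(hK (x + alpha x)) Px addr0.
- apply: functional_extensionality => z.
  by rewrite conv_degen /= subrK.
- apply: functional_extensionality => z.
  by rewrite conv_degen /= M2 opprD addrA subrK.
Qed.

End Main.

Theorem theorem2p1 (X : finZmodType)
  (hX : forall x : X, x + x = 0 -> x = 0)
  (alpha : {additive X -> X}) (halpha : bijective alpha)
  (mu1 mu2 : X -> algC)
  (hmu1 : is_distribution mu1) (hmu2 : is_distribution mu2)
  (hne1 : forall chi, is_character chi -> charfun mu1 chi != 0)
  (hne2 : forall chi, is_character chi -> charfun mu2 chi != 0)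
  (hsym : cond_symmetric alpha mu1 mu2) :
  exists (omega : X -> algC) (x1 x2 : X),
    [/\ is_distribution omega,
        (forall x, x \notin kerIa alpha -> omega x = 0),
        mu1 = conv omega (degen x1) &
        mu2 = conv omega (degen x2)].
Proof.
have dI : injective (fun x : X => x + x) by apply: dblI.
case: (injF_bij dI) => h _ hK.
case: halpha => ai aiK' aiK.
exact: (@main_sec X hX alpha ai aiK aiK' h hK mu1 mu2 hmu1 hmu2 hne1 hne2 hsym).
Qed.
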